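(* Let $r,s,t$ be nonzero reals with $r+s+t=0$ and $\lambda=(\lambda_k)_{k\ge0}$ a strictly increasing sequence of positive reals with $\lambda_k\to\infty$. For $x\in\omega$ let $\widehat W_n(x)=\frac{1}{\lambda_n}\sum_{k=0}^n(\lambda_k-\lambda_{k-1})(rx_k+sx_{k-1}+tx_{k-2})$ and $c_0^\lambda(\widehat B)=\{x\in\omega:\lim_{n\to\infty}\widehat W_n(x)=0\}$. Then $c\subsetneq c_0^\lambda(\widehat B)$.
   Context: $\omega$: all complex sequences indexed by $\mathbb{N}=\{0,1,\dots\}$; $c$: convergent sequences. Convention: terms with negative subscript are $0$ ($x_{-1}=x_{-2}=0$, $\lambda_{-1}=0$). *)

(* Defs.v *)
From Stdlib Require Import Reals.
From Coquelicot Require Import Coquelicot.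
Open Scope R_scope.

(* Convention: terms with negative subscript are 0. *)
Definition shift1 {A : Type} (z : A) (u : nat -> A) (k : nat) : A :=
  match k with O => z | S k' => u k' end.

(* x_{k-1}, x_{k-2} with x_{-1} = x_{-2} = 0 *)
Definition xprev (x : nat -> C) : nat -> C := shift1 (RtoC 0) x.
Definition xprev2 (x : nat -> C) : nat -> C := xprev (xprev x).
Definition lprev (lam : nat -> R) : nat -> R := shift1 0 lam.

Definition What (r s t : R) (lam : nat -> R) (x : nat -> C) (n : nat) : C :=
  Cmult (RtoC (/ lam n))
    (sum_n (fun k => Cmult (RtoC (lam k - lprev lam k))
              (Cplus (Cplus (Cmult (RtoC r) (x k)) (Cmult (RtoC s) (xprev x k)))
                     (Cmult (RtoC t) (xprev2 x k)))) n).

Definition conv_seq (x : nat -> C) : Prop :=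
  exists l : C, filterlim x eventually (locally l).

Definition c0_lam_B (r s t : R) (lam : nat -> R) (x : nat -> C) : Prop :=
  filterlim (What r s t lam x) eventually (locally (RtoC 0)).

(* Main.v *)
Require Import Defs.
From Stdlib Require Import Reals Lra Lia.
From Coquelicot Require Import Coquelicot.
Open Scope R_scope.

Lemma null_filterlim (f : nat -> C) :
  (forall eps, 0 < eps -> exists N, forall n, (N <= n)%nat -> Cmod (f n) < eps) ->
  filterlim f eventually (locally (RtoC 0)).
Proof.
  intros H.
  apply (filterlim_filter_le_2 _ (@locally_norm_le_locally C_AbsRing C_NormedModule (RtoC 0))).
  intros P [eps HP].
  destruct (H eps (cond_pos eps)) as [N HN].
  exists N. intros n Hn. apply HP.
  change (Cmod (Cminus (f n) (RtoC 0)) < eps).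
  replace (Cminus (f n) (RtoC 0)) with (f n) by ring. auto.
Qed.

Lemma filterlim_null (x : nat -> C) (l : C) :
  filterlim x eventually (locally l) ->
  forall eps, 0 < eps -> exists N, forall n, (N <= n)%nat -> Cmod (Cminus (x n) l) < eps.
Proof.
  intros H eps Heps.
  destruct (H _ (@locally_le_locally_norm C_AbsRing C_NormedModule l _ (@locally_norm_ball_norm C_AbsRing C_NormedModule l (mkposreal eps Heps)))) as [N HN].
  exists N. intros n Hn. apply (HN n Hn).
Qed.

Lemma toeplitz (lam : nat -> R) (Y : nat -> C)
  (hpos : forall k, 0 < lam k) (hinc : forall k, lam k < lam (S k))
  (hinf : is_lim_seq lam p_infty)
  (HY : forall eps, 0 < eps -> exists N, forall k, (N <= k)%nat -> Cmod (Y k) < eps) :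
  filterlim (fun n => Cmult (RtoC (/ lam n))
     (sum_n (fun k => Cmult (RtoC (lam k - lprev lam k)) (Y k)) n))
   eventually (locally (RtoC 0)).
Proof.
  apply null_filterlim. intros eps Heps.
  destruct (HY (eps/2)) as [N HN]; [lra|].
  set (g := fun k => Cmult (RtoC (lam k - lprev lam k)) (Y k)).
  set (S0 := Cmod (sum_n g N)).
  assert (Hb : forall n, (N <= n)%nat -> Cmod (sum_n g n) <= S0 + eps/2 * lam n).
  { induction 1.
    - pose proof (hpos N). unfold S0. nra.
    - rewrite sum_Sn.
      eapply Rle_trans; [apply Cmod_triangle|].
      unfold g at 2. rewrite Cmod_mult, Cmod_R. simpl lprev.
      pose proof (hinc m).
      rewrite Rabs_pos_eq by lra.
      assert (Cmod (Y (S m)) < eps/2) by (apply HN; lia).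
      assert ((lam (S m) - lam m) * Cmod (Y (S m)) <= (lam (S m) - lam m) * (eps/2))
        by (apply Rmult_le_compat_l; lra).
      change (Cmod (sum_n g m) + (lam (S m) - lam m) * Cmod (Y (S m)) <= S0 + eps / 2 * lam (S m)).
      lra. }
  apply is_lim_seq_spec in hinf.
  destruct (hinf (2 * S0 / eps)) as [M HM].
  exists (max N M). intros n Hn.
  rewrite Cmod_mult, Cmod_R.
  pose proof (hpos n) as Hp.
  rewrite Rabs_pos_eq by (left; apply Rinv_0_lt_compat; lra).
  specialize (Hb n ltac:(lia)). specialize (HM n ltac:(lia)).
  fold g.
  assert (HS0 : 0 <= S0) by apply Cmod_ge_0.
  assert (2 * S0 < eps * lam n).
  { apply (Rmult_lt_compat_l eps) in HM; [|lra].
    replace (eps * (2 * S0 / eps)) with (2*S0) in HM by (field; lra). lra. }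
  apply (Rmult_lt_reg_l (lam n)); [lra|].
  rewrite <- Rmult_assoc, Rinv_r by lra. nra.
Qed.

Lemma ln_diff (a : R) : 0 < a -> 0 <= ln (a + 1) - ln a <= / a.
Proof.
  intros Ha. split.
  - assert (ln a <= ln (a+1)) by (apply ln_le; lra). lra.
  - rewrite <- ln_div by lra.
    replace ((a+1)/a) with (1 + /a) by (field; lra).
    rewrite <- (ln_exp (/a)) at 2.
    apply ln_le. { pose proof (Rinv_0_lt_compat a Ha). lra. }
    apply exp_ineq1_le.
Qed.

Theorem theorem5 (r s t : R) (lam : nat -> R)
  (hr : r <> 0) (hs : s <> 0) (ht : t <> 0) (hrst : r + s + t = 0)
  (hpos : forall k, 0 < lam k) (hinc : forall k, lam k < lam (S k))
  (hinf : is_lim_seq lam p_infty) :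
  (forall x : nat -> C, conv_seq x -> c0_lam_B r s t lam x) /\
  (exists x : nat -> C, c0_lam_B r s t lam x /\ ~ conv_seq x).
Proof.
  assert (E : RtoC t = Cminus (Copp (RtoC r)) (RtoC s)).
  { apply injective_projections; simpl; lra. }
  split.
  - intros x [l Hl]. unfold c0_lam_B, What. apply toeplitz; auto.
    intros eps Heps.
    set (K := Rabs r + Rabs s + Rabs t + 1).
    assert (HK : 0 < K) by (unfold K; pose proof (Rabs_pos r); pose proof (Rabs_pos s);
                             pose proof (Rabs_pos t); lra).
    destruct (filterlim_null x l Hl (eps / K)) as [N HN].
    { apply Rdiv_lt_0_compat; lra. }
    exists (N + 2)%nat. intros k Hk.
    destruct k as [|[|m]]; [lia|lia|].
    unfold xprev2, xprev; simpl shift1.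
    replace (Cplus (Cplus (Cmult (RtoC r) (x (S (S m)))) (Cmult (RtoC s) (x (S m))))
                   (Cmult (RtoC t) (x m)))
      with (Cplus (Cplus (Cmult (RtoC r) (Cminus (x (S (S m))) l))
                         (Cmult (RtoC s) (Cminus (x (S m)) l)))
                   (Cmult (RtoC t) (Cminus (x m) l)))
      by (rewrite E; ring).
    assert (H1 := HN (S (S m)) ltac:(lia)).
    assert (H2 := HN (S m) ltac:(lia)).
    assert (H3 := HN m ltac:(lia)).
    eapply Rle_lt_trans; [apply Cmod_triangle|].
    eapply Rle_lt_trans; [apply Rplus_le_compat_r; apply Cmod_triangle|].
    rewrite !Cmod_mult, !Cmod_R.
    pose proof (Rabs_pos r); pose proof (Rabs_pos s); pose proof (Rabs_pos t).
    assert (Rabs r * Cmod (Cminus (x (S (S m))) l) <= Rabs r * (eps/K))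
      by (apply Rmult_le_compat_l; lra).
    assert (Rabs s * Cmod (Cminus (x (S m)) l) <= Rabs s * (eps/K))
      by (apply Rmult_le_compat_l; lra).
    assert (Rabs t * Cmod (Cminus (x m) l) <= Rabs t * (eps/K))
      by (apply Rmult_le_compat_l; lra).
    assert (Rabs r * (eps/K) + Rabs s * (eps/K) + Rabs t * (eps/K) < eps).
    { replace (Rabs r * (eps/K) + Rabs s * (eps/K) + Rabs t * (eps/K))
        with (eps * ((K - 1)/K)) by (unfold K; field; lra).
      replace eps with (eps * 1) at 2 by ring.
      apply Rmult_lt_compat_l; [lra|].
      apply (Rmult_lt_reg_l K); [lra|]. field_simplify; lra. }
    lra.
  - exists (fun k => RtoC (ln (INR k + 1))). split.
    + unfold c0_lam_B, What. apply toeplitz; auto.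
      intros eps Heps.
      destruct (INR_unbounded ((Rabs r + Rabs t) / eps)) as [N HN].
      exists (N + 2)%nat. intros k Hk.
      destruct k as [|[|m]]; [lia|lia|].
      change (Cmod (Cplus (Cplus (Cmult (RtoC r) (RtoC (ln (INR (S (S m)) + 1))))
                (Cmult (RtoC s) (RtoC (ln (INR (S m) + 1)))))
                (Cmult (RtoC t) (RtoC (ln (INR m + 1))))) < eps).
      rewrite <- !RtoC_mult, <- !RtoC_plus, Cmod_R.
      rewrite !S_INR.
      assert (Hm : INR N <= INR m) by (apply le_INR; lia).
      pose proof (pos_INR m).
      pose proof (ln_diff (INR m + 1) ltac:(lra)) as [A1 A2].
      pose proof (ln_diff (INR m + 1 + 1) ltac:(lra)) as [B1 B2].
      replace (r * ln (INR m + 1 + 1 + 1) + s * ln (INR m + 1 + 1) + t * ln (INR m + 1))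
        with (r * (ln (INR m + 1 + 1 + 1) - ln (INR m + 1 + 1))
              - t * (ln (INR m + 1 + 1) - ln (INR m + 1)))
        by (replace s with (-r - t) by lra; ring).
      set (d1 := ln (INR m + 1 + 1 + 1) - ln (INR m + 1 + 1)) in *.
      set (d0 := ln (INR m + 1 + 1) - ln (INR m + 1)) in *.
      eapply Rle_lt_trans; [apply Rabs_triang|].
      rewrite Rabs_Ropp, !Rabs_mult, (Rabs_pos_eq d1), (Rabs_pos_eq d0) by lra.
      assert (Hi1 : / (INR m + 1 + 1) <= / (INR m + 1)).
      { apply Rinv_le_contravar; lra. }
      pose proof (Rabs_pos r); pose proof (Rabs_pos t).
      assert (Rabs r * d1 <= Rabs r * / (INR m + 1)) by (apply Rmult_le_compat_l; lra).
      assert (Rabs t * d0 <= Rabs t * / (INR m + 1)) by (apply Rmult_le_compat_l; lra).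
      assert ((Rabs r + Rabs t) * / (INR m + 1) < eps).
      { apply (Rmult_lt_reg_l (INR m + 1)); [lra|].
        field_simplify; [|lra].
        apply (Rmult_lt_compat_l eps) in HN; [|lra].
        replace (eps * ((Rabs r + Rabs t) / eps)) with (Rabs r + Rabs t) in HN
          by (field; lra).
        nra. }
      lra.
    + intros [l Hl].
      destruct (filterlim_null _ l Hl (1/4)) as [N HN]; [lra|].
      assert (H1 := HN (2 * N + 1)%nat ltac:(lia)).
      assert (H2 := HN N ltac:(lia)).
      assert (Heq : INR (2 * N + 1) + 1 = 2 * (INR N + 1))
        by (rewrite plus_INR, mult_INR; simpl; lra).
      pose proof (pos_INR N).
      assert (Hd : Cminus (RtoC (ln (INR (2 * N + 1) + 1))) (RtoC (ln (INR N + 1)))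
                   = RtoC (ln 2)).
      { rewrite Heq, ln_mult by lra.
        apply injective_projections; simpl; lra. }
      assert (Hc : Cmod (RtoC (ln 2)) < 1/2).
      { rewrite <- Hd.
        replace (Cminus (RtoC (ln (INR (2 * N + 1) + 1))) (RtoC (ln (INR N + 1))))
          with (Cplus (Cminus (RtoC (ln (INR (2 * N + 1) + 1))) l)
                      (Copp (Cminus (RtoC (ln (INR N + 1))) l))) by ring.
        eapply Rle_lt_trans; [apply Cmod_triangle|].
        rewrite Cmod_opp. lra. }
      rewrite Cmod_R, Rabs_pos_eq in Hc by (pose proof ln_lt_2; lra).
      pose proof ln_lt_2. lra.
Qed.
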